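(* Let $0<q<1$ and let $l$ be a non-negative integer. Then \[ q^{2}(1+q)^{2}[l+1]_{q^{2}}+q^{2l+4}+[l+1]_{q^{2}}!\sum_{n=1}^{\infty}\frac{(1/2|q^{2})_{n}^{2}}{[n+1]_{q^{2}}!\,[l+n+1]_{q^{2}}!}\,q^{2(l+2)(n+1)} =\frac{(1+q)^{2}\,([l+1]_{q^{2}}!)^{2}}{\pi_{q}\,(1/2|q^{2})_{l+1}^{2}}\,q^{9/4}. \]
   Context: Let $0<q<1$ and write $q^{x}=e^{x\log q}$. $[z]_{q^2}=\frac{1-q^{2z}}{1-q^2}$; $[0]_{q^2}!=1$, $[n]_{q^2}!=\prod_{k=1}^n[k]_{q^2}$; $(1/2|q^2)_n=\prod_{k=0}^{n-1}[1/2+k]_{q^2}$ (empty product $=1$). With $(z;q)_\infty=\prod_{k\ge0}(1-zq^k)$, $\pi_q=(1-q^2)q^{1/4}\frac{(q^2;q^2)_\infty^2}{(q;q^2)_\infty^2}$. *)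

(* Defs.v *)
From Stdlib Require Import Reals Lra Lia ClassicalEpsilon.
Open Scope R_scope.

(* Limit of a real sequence (0 if it does not converge). *)
Definition lim_seq (u : nat -> R) : R :=
  match excluded_middle_informative (exists l, Un_cv u l) with
  | left H => proj1_sig (constructive_indefinite_description _ H)
  | right _ => 0
  end.

Fixpoint prod_upto (f : nat -> R) (n : nat) : R :=
  match n with
  | O => 1
  | S m => prod_upto f m * f m
  end.

Definition qpow (q x : R) : R := Rpower q x.

Definition qbr (q z : R) : R := (1 - qpow q (2 * z)) / (1 - q ^ 2).

Definition qfact (q : R) (n : nat) : R :=
  prod_upto (fun k => qbr q (INR (S k))) n.

Definition qhalf (q : R) (n : nat) : R :=
  prod_upto (fun k => qbr q (1/2 + INR k)) n.

Definition qpoch_inf (z p : R) : R :=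
  lim_seq (fun N => prod_upto (fun k => 1 - z * p ^ k) N).

Definition pi_q (q : R) : R :=
  (1 - q ^ 2) * qpow q (1/4) * (qpoch_inf (q ^ 2) (q ^ 2)) ^ 2
    / (qpoch_inf q (q ^ 2)) ^ 2.

Definition series_term (q : R) (l n : nat) : R :=
  (qhalf q n) ^ 2 / (qfact q (n + 1) * qfact q (l + n + 1))
    * q ^ (2 * (l + 2) * (n + 1)).

(* Main.v *)
Require Import Defs.
From Stdlib Require Import Reals Lra Lia Psatz ClassicalEpsilon.
From Coquelicot Require Import Coquelicot.
Open Scope R_scope.

Definition br (q : R) (k : nat) : R := (1 - q ^ k) / (1 - q ^ 2).

Lemma qbr_nat q n : 0 < q -> qbr q (INR n) = br q (2 * n).
Proof.
  intros. unfold qbr, qpow, br.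
  replace (2 * INR n) with (INR (2 * n)) by (rewrite mult_INR; simpl; ring).
  now rewrite Rpower_pow.
Qed.

Lemma qbr_half q k : 0 < q -> qbr q (1/2 + INR k) = br q (2 * k + 1).
Proof.
  intros. unfold qbr, qpow, br.
  replace (2 * (1/2 + INR k)) with (INR (2 * k + 1))
    by (rewrite plus_INR, mult_INR; simpl; field).
  now rewrite Rpower_pow.
Qed.

Lemma fact_S q n : 0 < q -> qfact q (S n) = qfact q n * br q (2 * S n).
Proof. intros. unfold qfact. cbn [prod_upto]. now rewrite qbr_nat. Qed.

Lemma half_S q n : 0 < q -> qhalf q (S n) = qhalf q n * br q (2 * n + 1).
Proof. intros. unfold qhalf. cbn [prod_upto]. now rewrite qbr_half. Qed.

Lemma pow_lt1 q k : 0 < q -> q < 1 -> (0 < k)%nat -> q ^ k < 1.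
Proof. intros. apply pow_lt_1_compat; [lra|lia]. Qed.

Lemma pow_pos' q k : 0 < q -> 0 < q ^ k.
Proof. intros; now apply pow_lt. Qed.

Lemma pow_mono q m n : 0 < q -> q < 1 -> (m <= n)%nat -> q ^ n <= q ^ m.
Proof.
  intros. replace n with (m + (n - m))%nat by lia. rewrite pow_add.
  assert (0 < q ^ m) by now apply pow_lt.
  assert (q ^ (n - m) <= 1).
  { destruct (n - m)%nat eqn:E. simpl; lra. left; apply pow_lt1; auto; lia. }
  nra.
Qed.

Lemma den_pos q : 0 < q -> q < 1 -> 0 < 1 - q ^ 2.
Proof. intros. assert (q^2 < 1) by (apply pow_lt1; auto). lra. Qed.

Lemma br_pos q k : 0 < q -> q < 1 -> (0 < k)%nat -> 0 < br q k.
Proof.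
  intros. unfold br. apply Rdiv_lt_0_compat. assert (q ^ k < 1) by now apply pow_lt1. lra.
  now apply den_pos.
Qed.

Lemma br_mono q m n : 0 < q -> q < 1 -> (m <= n)%nat -> br q m <= br q n.
Proof.
  intros. unfold br. apply Rmult_le_compat_r. left; apply Rinv_0_lt_compat, den_pos; auto.
  assert (q ^ n <= q ^ m) by now apply pow_mono. lra.
Qed.

Lemma br_le q k : 0 < q -> q < 1 -> br q k <= / (1 - q ^ 2).
Proof.
  intros. unfold br. unfold Rdiv. rewrite <- (Rmult_1_l (/ (1 - q^2))) at 2.
  apply Rmult_le_compat_r. left; apply Rinv_0_lt_compat, den_pos; auto.
  assert (0 < q ^ k) by now apply pow_lt. lra.
Qed.

Lemma fact_pos q n : 0 < q -> q < 1 -> 0 < qfact q n.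
Proof.
  intros. induction n. unfold qfact; simpl; lra.
  rewrite fact_S by auto. apply Rmult_lt_0_compat; auto. apply br_pos; auto; lia.
Qed.

Lemma half_pos q n : 0 < q -> q < 1 -> 0 < qhalf q n.
Proof.
  intros. induction n. unfold qhalf; simpl; lra.
  rewrite half_S by auto. apply Rmult_lt_0_compat; auto. apply br_pos; auto; lia.
Qed.

Definition u (q : R) (l n : nat) : R := qfact q (l + 1) * series_term q l n.

Lemma u_pos q l n : 0 < q -> q < 1 -> 0 < u q l n.
Proof.
  intros. unfold u, series_term. pose proof (fact_pos q (l+1) H H0).
  pose proof (fact_pos q (n+1) H H0). pose proof (fact_pos q (l+n+1) H H0).
  pose proof (half_pos q n H H0). pose proof (pow_pos' q (2 * (l + 2) * (n + 1)) H).
  apply Rmult_lt_0_compat; auto. apply Rmult_lt_0_compat; auto.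
  apply Rdiv_lt_0_compat. now apply pow_lt. now apply Rmult_lt_0_compat.
Qed.

Lemma u_Sl q l n : 0 < q -> q < 1 ->
  u q (S l) n = u q l n * br q (2 * l + 4) / br q (2 * l + 2 * n + 4) * q ^ (2 * n + 2).
Proof.
  intros. unfold u, series_term.
  replace (S l + 1)%nat with (S (l + 1)) by lia.
  replace (S l + n + 1)%nat with (S (l + n + 1)) by lia.
  rewrite !fact_S by auto.
  replace (2 * (S l + 2) * (n + 1))%nat with (2 * (l + 2) * (n + 1) + (2 * n + 2))%nat by lia.
  rewrite pow_add.
  replace (2 * S (l + 1))%nat with (2 * l + 4)%nat by lia.
  replace (2 * S (l + n + 1))%nat with (2 * l + 2 * n + 4)%nat by lia.
  pose proof (fact_pos q (n+1) H H0). pose proof (fact_pos q (l+n+1) H H0).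
  pose proof (br_pos q (2 * l + 2 * n + 4) H H0 ltac:(lia)).
  field. lra.
Qed.

Lemma u_Sn q l n : 0 < q -> q < 1 ->
  u q l (S n) = u q l n * br q (2 * n + 1) ^ 2 / (br q (2 * n + 4) * br q (2 * l + 2 * n + 4)) * q ^ (2 * l + 4).
Proof.
  intros. unfold u, series_term.
  replace (2 * (l + 2) * (S n + 1))%nat with (2 * (l + 2) * (n + 1) + (2 * l + 4))%nat by lia.
  replace (S n + 1)%nat with (S (n + 1)) by lia.
  replace (l + S n + 1)%nat with (S (l + n + 1)) by lia.
  rewrite !fact_S, half_S by auto.
  rewrite pow_add.
  replace (2 * S (n + 1))%nat with (2 * n + 4)%nat by lia.
  replace (2 * S (l + n + 1))%nat with (2 * l + 2 * n + 4)%nat by lia.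
  pose proof (fact_pos q (n+1) H H0). pose proof (fact_pos q (l+n+1) H H0).
  pose proof (br_pos q (2 * l + 2 * n + 4) H H0 ltac:(lia)).
  pose proof (br_pos q (2 * n + 4) H H0 ltac:(lia)).
  field. lra.
Qed.

Lemma powsplit q a b c : (a = b + c)%nat -> q ^ a = q ^ b * q ^ c.
Proof. intros ->. apply pow_add. Qed.

Lemma keyD q l n : 0 < q -> q < 1 ->
  br q (2 * l + 3) ^ 2 * u q (S l) n - br q (2 * l + 4) ^ 2 * u q l n =
  br q (2 * l + 4) * (br q (2 * n + 4) * u q l (S n) - br q (2 * n + 2) * u q l n).
Proof.
  intros. rewrite u_Sl, u_Sn by auto.
  pose proof (br_pos q (2 * l + 2 * n + 4) H H0 ltac:(lia)).
  pose proof (br_pos q (2 * n + 4) H H0 ltac:(lia)).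
  pose proof (den_pos q H H0).
  unfold br in *.
  rewrite (powsplit q (2*l+4) (2*l+3) 1) by lia.
  rewrite (powsplit q (2*n+2) (2*n+1) 1) by lia.
  rewrite (powsplit q (2*n+4) (2*n+1) 3) in * by lia.
  rewrite (powsplit q (2*l+2*n+4) (2*l+3) (2*n+1)) in H1 by lia.
  rewrite (powsplit q (2*l+2*n+4) (2*l+3) (2*n+1)) by lia.
  generalize (u q l n). intro U.
  assert (Hx : 1 - q ^ (2 * l + 3) * q ^ (2 * n + 1) <> 0).
  { intro E. rewrite E in H1. unfold Rdiv in H1. rewrite Rmult_0_l in H1. lra. }
  assert (Hy : 1 - q ^ (2 * n + 1) * q ^ 3 <> 0).
  { intro E. rewrite E in H2. unfold Rdiv in H2. rewrite Rmult_0_l in H2. lra. }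
  generalize dependent (q ^ (2 * l + 3)). generalize dependent (q ^ (2 * n + 1)).
  intros Y X Hx Hy. intros.
  field. repeat split; auto; lra.
Qed.

Lemma u0 q l : 0 < q -> q < 1 -> u q l 0 = q ^ (2 * l + 4).
Proof.
  intros. unfold u, series_term. replace (l + 0 + 1)%nat with (l + 1)%nat by lia.
  replace (0 + 1)%nat with 1%nat by lia.
  replace (qfact q 1) with 1.
  2:{ rewrite fact_S by auto. unfold qfact, br. simpl. pose proof (den_pos q H H0). field. lra. }
  unfold qhalf. simpl prod_upto.
  replace (2 * (l + 2) * 1)%nat with (2 * l + 4)%nat by lia.
  pose proof (fact_pos q (l+1) H H0). field. lra.
Qed.

Lemma keyB q l : 0 < q -> q < 1 ->
  br q (2 * l + 3) ^ 2 * (q^2 * (1+q)^2 * br q (2 * (S l + 1)))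
  - br q (2 * l + 4) ^ 2 * (q^2 * (1+q)^2 * br q (2 * (l + 1)))
  = br q (2 * l + 4) * q ^ (2 * l + 4).
Proof.
  intros. pose proof (den_pos q H H0). unfold br.
  replace (2 * (S l + 1))%nat with (2 * l + 4)%nat by lia.
  replace (2 * (l + 1))%nat with (2 * l + 2)%nat by lia.
  rewrite (powsplit q (2*l+4) (2*l+2) 2) by lia.
  rewrite (powsplit q (2*l+3) (2*l+2) 1) by lia.
  generalize dependent (q ^ (2*l+2)). intros X. field. lra.
Qed.

Definition aa q l := q^2 * (1+q)^2 * br q (2 * (l + 1)).
Definition PS q l N := aa q l + sum_f_R0 (u q l) N.

Lemma br2 q : 0 < q -> q < 1 -> br q 2 = 1.
Proof. intros. pose proof (den_pos q H H0). unfold br. field. lra. Qed.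

Lemma partial q l N : 0 < q -> q < 1 ->
  br q (2 * l + 3) ^ 2 * PS q (S l) N - br q (2 * l + 4) ^ 2 * PS q l N
  = br q (2 * l + 4) * (br q (2 * N + 4) * u q l (S N)).
Proof.
  intros. unfold PS, aa. induction N.
  - simpl sum_f_R0. pose proof (keyB q l H H0). pose proof (keyD q l 0 H H0).
    rewrite u0 in * by auto. rewrite br2 in H2 by auto. simpl (2 * 0 + 4)%nat in *.
   
    rewrite (u0 q l) in * by auto. lra.
  - cbn [sum_f_R0]. pose proof (keyD q l (S N) H H0).
    replace (2 * S N + 2)%nat with (2 * N + 4)%nat in H1 by lia. lra.
Qed.

Lemma u_bound q l n : 0 < q -> q < 1 -> u q l n <= q ^ (2 * l + 4) * (q ^ 2) ^ n.
Proof.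
  intros. induction n.
  - rewrite u0 by auto. simpl; lra.
  - rewrite u_Sn by auto.
    pose proof (br_pos q (2 * n + 1) H H0 ltac:(lia)).
    pose proof (br_pos q (2 * n + 4) H H0 ltac:(lia)).
    pose proof (br_pos q (2 * l + 2 * n + 4) H H0 ltac:(lia)).
    pose proof (br_mono q (2 * n + 1) (2 * n + 4) H H0 ltac:(lia)).
    pose proof (br_mono q (2 * n + 1) (2 * l + 2 * n + 4) H H0 ltac:(lia)).
    assert (Hr : br q (2 * n + 1) ^ 2 / (br q (2 * n + 4) * br q (2 * l + 2 * n + 4)) <= 1).
    { apply Rmult_le_reg_r with (br q (2 * n + 4) * br q (2 * l + 2 * n + 4)).
      nra. unfold Rdiv. rewrite Rmult_assoc, Rinv_l by nra. nra. }
    assert (Hr0 : 0 <= br q (2 * n + 1) ^ 2 / (br q (2 * n + 4) * br q (2 * l + 2 * n + 4))).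
    { apply Rle_mult_inv_pos; nra. }
    pose proof (pow_mono q 2 (2 * l + 4) H H0 ltac:(lia)).
    pose proof (u_pos q l n H H0).
    pose proof (pow_pos' q (2 * l + 4) H).
    assert (H9 : u q l n * (br q (2 * n + 1) ^ 2 / (br q (2 * n + 4) * br q (2 * l + 2 * n + 4))) * q ^ (2 * l + 4) <= u q l n * q ^ 2).
    { apply Rmult_le_compat; nra. }
    assert (0 <= q^2) by (apply pow_le; lra).
    replace ((q ^ 2) ^ S n) with (q ^ 2 * (q ^ 2) ^ n) by (simpl; ring).
    apply Rle_trans with (u q l n * q ^ 2).
    { eapply Rle_trans; [ right | apply H9 ]. unfold Rdiv; ring. }
    replace (q ^ (2 * l + 4) * (q ^ 2 * (q ^ 2) ^ n)) with ((q ^ (2 * l + 4) * (q ^ 2) ^ n) * q^2) by ring.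
    apply Rmult_le_compat_r; auto.
Qed.

Lemma series_lim a : ex_series a -> is_lim_seq (sum_f_R0 a) (Series a).
Proof. intro H. apply Series_correct in H. apply is_series_Reals in H. apply is_lim_seq_Reals. exact H. Qed.

Lemma ex_geomc c x : 0 <= x < 1 -> ex_series (fun n => c * x ^ n).
Proof.
  intros. apply (ex_series_scal_l c (fun n => x ^ n)). apply ex_series_geom. rewrite Rabs_pos_eq; lra.
Qed.

Lemma Series_geomc c x : 0 <= x < 1 -> Series (fun n => c * x ^ n) = c / (1 - x).
Proof.
  intros. rewrite Series_scal_l, Series_geom. reflexivity. rewrite Rabs_pos_eq; lra.
Qed.

Lemma q2bounds q : 0 < q -> q < 1 -> 0 <= q ^ 2 < 1.
Proof. intros. pose proof (den_pos q H H0). split. apply pow_le; lra. lra. Qed.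

Lemma u_ex q l : 0 < q -> q < 1 -> ex_series (u q l).
Proof.
  intros. apply (@ex_series_le R_AbsRing R_CompleteNormedModule _ (fun n => q ^ (2 * l + 4) * (q ^ 2) ^ n)).
  - intro n. change norm with Rabs. simpl. rewrite Rabs_pos_eq. now apply u_bound.
    left; now apply u_pos.
  - apply ex_geomc. now apply q2bounds.
Qed.

Lemma Series_u_bounds q l : 0 < q -> q < 1 ->
  0 <= Series (u q l) <= q ^ (2 * l + 4) / (1 - q ^ 2).
Proof.
  intros. split.
  - pose proof (is_lim_seq_le (fun _ => 0) (sum_f_R0 (u q l)) 0 (Series (u q l))).
    simpl in H1. apply H1.
    + intro n. apply cond_pos_sum. intro; left; now apply u_pos.
    + apply is_lim_seq_const.
    + apply series_lim, u_ex; auto.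
  - rewrite <- Series_geomc by now apply q2bounds. apply Series_le.
    + intro n. split. left; now apply u_pos. now apply u_bound.
    + apply ex_geomc. now apply q2bounds.
Qed.

Definition UU q l := aa q l + Series (u q l).

Lemma PS_lim q l : 0 < q -> q < 1 -> is_lim_seq (PS q l) (UU q l).
Proof.
  intros. unfold PS, UU. apply (is_lim_seq_plus' (fun _ => aa q l) (sum_f_R0 (u q l))).
  apply is_lim_seq_const. apply series_lim, u_ex; auto.
Qed.

Lemma lim_cmul (v : nat -> R) (c l : R) : is_lim_seq v l -> is_lim_seq (fun n => c * v n) (c * l).
Proof. intro H. apply (is_lim_seq_mult' (fun _ => c) v). apply is_lim_seq_const. exact H. Qed.

Lemma geomS_lim q K : 0 < q -> q < 1 -> is_lim_seq (fun N => K * (q ^ 2) ^ (S N)) 0.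
Proof.
  intros. replace 0 with (K * 0) by ring. apply lim_cmul.
  apply (is_lim_seq_incr_1 (fun n => (q ^ 2) ^ n)). apply is_lim_seq_geom.
  pose proof (q2bounds q H H0). rewrite Rabs_pos_eq; lra.
Qed.

Lemma lim_uniq (v : nat -> R) (a b : R) : is_lim_seq v a -> is_lim_seq v b -> a = b.
Proof.
  intros H1 H2. apply is_lim_seq_unique in H1. apply is_lim_seq_unique in H2.
  rewrite H1 in H2. now injection H2.
Qed.

Lemma UU_rec q l : 0 < q -> q < 1 ->
  br q (2 * l + 3) ^ 2 * UU q (S l) = br q (2 * l + 4) ^ 2 * UU q l.
Proof.
  intros.
  set (W := fun N => br q (2 * l + 3) ^ 2 * PS q (S l) N - br q (2 * l + 4) ^ 2 * PS q l N).
  assert (H1 : is_lim_seq W (br q (2 * l + 3) ^ 2 * UU q (S l) - br q (2 * l + 4) ^ 2 * UU q l)).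
  { apply is_lim_seq_minus'; apply lim_cmul; apply PS_lim; auto. }
  assert (H2 : is_lim_seq W 0).
  { pose proof (br_pos q (2 * l + 4) H H0 ltac:(lia)).
    pose proof (den_pos q H H0).
    apply is_lim_seq_le_le with (fun _ => 0)
      (fun N => (br q (2 * l + 4) / (1 - q ^ 2) * q ^ (2 * l + 4)) * (q ^ 2) ^ (S N)).
    - intro N. unfold W. rewrite partial by auto.
      pose proof (br_pos q (2 * N + 4) H H0 ltac:(lia)).
      pose proof (u_pos q l (S N) H H0).
      pose proof (u_bound q l (S N) H H0).
      pose proof (br_le q (2 * N + 4) H H0).
      split. apply Rmult_le_pos; [lra|]. apply Rmult_le_pos; lra.
      replace (br q (2 * l + 4) / (1 - q ^ 2) * q ^ (2 * l + 4) * (q ^ 2) ^ S N)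
        with (br q (2 * l + 4) * (/ (1 - q ^ 2) * (q ^ (2 * l + 4) * (q ^ 2) ^ S N))) by (unfold Rdiv; ring).
      apply Rmult_le_compat_l; [lra|]. apply Rmult_le_compat; lra.
    - apply is_lim_seq_const.
    - apply geomS_lim; auto. }
  pose proof (lim_uniq _ _ _ H1 H2). lra.
Qed.

Definition Qp q n := prod_upto (fun k => 1 - q * (q ^ 2) ^ k) n.
Definition Pp q n := prod_upto (fun k => 1 - q ^ 2 * (q ^ 2) ^ k) n.

Lemma half_Qp q n : 0 < q -> q < 1 -> qhalf q n * (1 - q ^ 2) ^ n = Qp q n.
Proof.
  intros. pose proof (den_pos q H H0). induction n.
  - unfold qhalf, Qp; simpl; ring.
  - rewrite half_S by auto. unfold Qp in *. cbn [prod_upto]. rewrite <- IHn.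
    unfold br. rewrite (powsplit q (2*n+1) (2*n) 1), pow_mult by lia. simpl pow. field. lra.
Qed.

Lemma fact_Pp q n : 0 < q -> q < 1 -> qfact q n * (1 - q ^ 2) ^ n = Pp q n.
Proof.
  intros. pose proof (den_pos q H H0). induction n.
  - unfold qfact, Pp; simpl; ring.
  - rewrite fact_S by auto. unfold Pp in *. cbn [prod_upto]. rewrite <- IHn.
    unfold br. rewrite (powsplit q (2*S n) (2*n) 2), pow_mult by lia. simpl pow. field. lra.
Qed.

Lemma Qp_pos q n : 0 < q -> q < 1 -> 0 < Qp q n.
Proof. intros. rewrite <- half_Qp by auto. apply Rmult_lt_0_compat. now apply half_pos.
  apply pow_lt, den_pos; auto. Qed.

Lemma Pp_pos q n : 0 < q -> q < 1 -> 0 < Pp q n.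
Proof. intros. rewrite <- fact_Pp by auto. apply Rmult_lt_0_compat. now apply fact_pos.
  apply pow_lt, den_pos; auto. Qed.

Lemma dec_cv (v : nat -> R) : (forall n, 0 < v n) -> (forall n, v (S n) <= v n) ->
  exists L : R, is_lim_seq v L /\ 0 <= L.
Proof.
  intros Hp Hd. destruct (decreasing_cv v Hd) as [L HL].
  - exists 0. intros x [i ->]. unfold opp_seq. specialize (Hp i). lra.
  - exists L. split. now apply is_lim_seq_Reals.
    pose proof (is_lim_seq_le (fun _ => 0) v 0 L). simpl in H. apply H.
    intro n; left; auto. apply is_lim_seq_const. now apply is_lim_seq_Reals.
Qed.

Lemma Qp_cv q : 0 < q -> q < 1 -> exists L : R, is_lim_seq (Qp q) L /\ 0 <= L.
Proof.
  intros. apply dec_cv. intro; now apply Qp_pos.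
  intro n. unfold Qp. cbn [prod_upto]. fold (Qp q n).
  pose proof (Qp_pos q n H H0). assert (0 <= q * (q^2)^n).
  { apply Rmult_le_pos. lra. apply pow_le, pow_le; lra. } nra.
Qed.

Lemma pow_le1 x n : 0 <= x <= 1 -> x ^ n <= 1.
Proof. intros. induction n; simpl. lra. assert (0 <= x ^ n) by (apply pow_le; lra). nra. Qed.

Lemma one_minus_ge_exp x b : 0 <= x <= b -> b < 1 -> exp (- (x / (1 - b))) <= 1 - x.
Proof.
  intros. pose proof (exp_ineq1_le (x / (1 - b))).
  assert (Hy : 0 <= x / (1 - b)) by (apply Rle_mult_inv_pos; lra).
  assert (E : exp (- (x / (1 - b))) * exp (x / (1 - b)) = 1).
  { rewrite <- exp_plus. replace (- (x / (1 - b)) + x / (1 - b)) with 0 by ring. apply exp_0. }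
  assert ((1 - x) * (1 + x / (1 - b)) >= 1).
  { replace ((1 - x) * (1 + x / (1 - b))) with (1 + x * (b - x) / (1 - b)) by (field; lra).
    assert (0 <= x * (b - x) / (1 - b)) by (apply Rle_mult_inv_pos; nra). lra. }
  pose proof (exp_pos (- (x / (1 - b)))).
  nra.
Qed.

Lemma Pp_lb q n : 0 < q -> q < 1 ->
  exp (- ((q ^ 2 * (1 - (q ^ 2) ^ n) / (1 - q ^ 2)) / (1 - q ^ 2))) <= Pp q n.
Proof.
  intros. pose proof (q2bounds q H H0). induction n.
  - unfold Pp; simpl. replace (q * (q * 1) * (1 - 1) / (1 - q * (q * 1)) / (1 - q * (q * 1))) with 0 by (field; lra).
    rewrite Ropp_0, exp_0. lra.
  - unfold Pp in *. cbn [prod_upto].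
    assert (0 <= (q^2)^n <= 1).
    { split. apply pow_le; lra. apply pow_le1 ; lra. }
    replace (- (q ^ 2 * (1 - (q ^ 2) ^ S n) / (1 - q ^ 2) / (1 - q ^ 2)))
      with (- (q ^ 2 * (1 - (q ^ 2) ^ n) / (1 - q ^ 2) / (1 - q ^ 2)) + - ((q^2 * (q^2)^n) / (1 - q^2)))
      by (simpl pow; field; lra).
    rewrite exp_plus. apply Rmult_le_compat.
    + left; apply exp_pos.
    + left; apply exp_pos.
    + exact IHn.
    + apply one_minus_ge_exp. split. apply Rmult_le_pos; lra. nra. lra.
Qed.

Lemma Pp_cv q : 0 < q -> q < 1 -> exists L : R, is_lim_seq (Pp q) L /\ 0 < L.
Proof.
  intros. pose proof (q2bounds q H H0).
  destruct (dec_cv (Pp q)) as [L [HL _]].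
  - intro; now apply Pp_pos.
  - intro n. unfold Pp. cbn [prod_upto]. fold (Pp q n).
    pose proof (Pp_pos q n H H0). assert (0 <= q^2 * (q^2)^n).
    { apply Rmult_le_pos. lra. apply pow_le; lra. } nra.
  - exists L. split; auto.
    set (d := exp (- ((q ^ 2 / (1 - q ^ 2)) / (1 - q ^ 2)))).
    assert (Hd : forall n, d <= Pp q n).
    { intro n. eapply Rle_trans; [| apply Pp_lb; auto].
      unfold d. assert (0 <= (q^2)^n <= 1) by (split; [apply pow_le; lra | apply pow_le1; lra]).
      assert (Hc : - (q ^ 2 / (1 - q ^ 2) / (1 - q ^ 2)) <= - (q ^ 2 * (1 - (q ^ 2) ^ n) / (1 - q ^ 2) / (1 - q ^ 2))).
      { apply Ropp_le_contravar. unfold Rdiv. apply Rmult_le_compat_r.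
        left; apply Rinv_0_lt_compat; lra. apply Rmult_le_compat_r.
        left; apply Rinv_0_lt_compat; lra. nra. }
      destruct Hc as [Hlt | Heq]. left; now apply exp_increasing. right; now rewrite Heq. }
    pose proof (is_lim_seq_le (fun _ => d) (Pp q) d L Hd (is_lim_seq_const d) HL) as Hle. simpl in Hle.
    pose proof (exp_pos (- ((q ^ 2 / (1 - q ^ 2)) / (1 - q ^ 2)))) as Hep. fold d in Hep. lra.
Qed.

Lemma lim_seq_eq (v : nat -> R) (L : R) : is_lim_seq v L -> lim_seq v = L.
Proof.
  intro H. apply is_lim_seq_Reals in H. unfold lim_seq.
  destruct (excluded_middle_informative _) as [e | n].
  - destruct (constructive_indefinite_description _ e) as [x Hx]. simpl.
    eapply UL_sequence; eauto.
  - exfalso. apply n. eauto.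
Qed.

Definition FF q l := UU q l * qhalf q (l + 1) ^ 2 / qfact q (l + 1) ^ 2.

Lemma FF_S q l : 0 < q -> q < 1 -> FF q (S l) = FF q l.
Proof.
  intros. unfold FF. replace (S l + 1)%nat with (S (l + 1)) by lia.
  rewrite fact_S, half_S by auto.
  replace (2 * (l + 1) + 1)%nat with (2 * l + 3)%nat by lia.
  replace (2 * S (l + 1))%nat with (2 * l + 4)%nat by lia.
  pose proof (UU_rec q l H H0).
  pose proof (br_pos q (2 * l + 3) H H0 ltac:(lia)).
  pose proof (br_pos q (2 * l + 4) H H0 ltac:(lia)).
  pose proof (fact_pos q (l+1) H H0).
  assert (UU q (S l) = br q (2 * l + 4) ^ 2 * UU q l / br q (2 * l + 3) ^ 2).
  { rewrite <- H1. field. lra. }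
  rewrite H5. field. lra.
Qed.

Lemma FF_const q l : 0 < q -> q < 1 -> FF q l = FF q 0.
Proof. intros. induction l. auto. rewrite FF_S; auto. Qed.

Lemma UU_lim q : 0 < q -> q < 1 ->
  is_lim_seq (UU q) (q ^ 2 * (1 + q) ^ 2 / (1 - q ^ 2)).
Proof.
  intros. pose proof (den_pos q H H0). set (K0 := q ^ 2 * (1 + q) ^ 2 / (1 - q ^ 2)).
  assert (Hlow : is_lim_seq (fun l => K0 - K0 * (q ^ 2) ^ S l) (K0 - 0)).
  { apply is_lim_seq_minus'. apply is_lim_seq_const. apply geomS_lim; auto. }
  assert (Hup : is_lim_seq (fun l => (K0 - K0 * (q ^ 2) ^ S l) + q ^ 2 / (1 - q ^ 2) * (q ^ 2) ^ S l) (K0 - 0 + 0)).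
  { apply is_lim_seq_plus'. auto. apply geomS_lim; auto. }
  replace (K0 - 0 + 0) with K0 in Hup by ring. replace (K0 - 0) with K0 in Hlow by ring.
  apply is_lim_seq_le_le with (2 := Hlow) (3 := Hup).
  intro l. pose proof (Series_u_bounds q l H H0).
  assert (E1 : aa q l = K0 - K0 * (q ^ 2) ^ S l).
  { unfold aa, K0, br. rewrite pow_mult. replace (l + 1)%nat with (S l) by lia. field. lra. }
  assert (E2 : q ^ (2 * l + 4) / (1 - q ^ 2) = q ^ 2 / (1 - q ^ 2) * (q ^ 2) ^ S l).
  { rewrite (powsplit q (2 * l + 4) 2 (2 * (S l))) by lia. rewrite pow_mult. field. lra. }
  unfold UU. lra.
Qed.

Lemma FF_lim q (Q P : R) : 0 < q -> q < 1 -> is_lim_seq (Qp q) Q -> is_lim_seq (Pp q) P -> P <> 0 ->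
  is_lim_seq (FF q) (q ^ 2 * (1 + q) ^ 2 / (1 - q ^ 2) * ((Q / P) * (Q / P))).
Proof.
  intros. apply is_lim_seq_ext with (fun l => UU q l * ((Qp q (S l) / Pp q (S l)) * (Qp q (S l) / Pp q (S l)))).
  - intro l. unfold FF. replace (l + 1)%nat with (S l) by lia.
    rewrite <- half_Qp, <- fact_Pp by auto.
    pose proof (fact_pos q (S l) H H0). pose proof (den_pos q H H0).
    assert (0 < (1 - q ^ 2) ^ S l) by (apply pow_lt; lra).
    field. lra.
  - apply is_lim_seq_mult'. apply UU_lim; auto.
    apply is_lim_seq_incr_1 in H1. apply is_lim_seq_incr_1 in H2.
    apply is_lim_seq_mult'; apply is_lim_seq_div'; auto.
Qed.

Theorem mainTheorem7 (q : R) (l : nat) (hq0 : 0 < q) (hq1 : q < 1) :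
  Un_cv
    (fun N =>
       q ^ 2 * (1 + q) ^ 2 * qbr q (INR (l + 1)) + q ^ (2 * l + 4)
       + qfact q (l + 1) * sum_f_R0 (fun k => series_term q l (S k)) N)
    ((1 + q) ^ 2 * (qfact q (l + 1)) ^ 2
       / (pi_q q * (qhalf q (l + 1)) ^ 2) * qpow q (9/4)).
Proof.
  destruct (Qp_cv q hq0 hq1) as [Q [HQ HQ0]].
  destruct (Pp_cv q hq0 hq1) as [P [HP HP0]].
  pose proof (den_pos q hq0 hq1) as Hd.
  assert (HF0 : FF q 0 = q ^ 2 * (1 + q) ^ 2 / (1 - q ^ 2) * ((Q / P) * (Q / P))).
  { apply (lim_uniq (FF q)). 2: apply FF_lim; auto; lra.
    apply is_lim_seq_ext with (fun _ => FF q 0). intro; symmetry; apply FF_const; auto.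
    apply is_lim_seq_const. }
  assert (HQn : Q <> 0).
  { intro E. rewrite E in HF0.
    assert (0 < FF q 0).
    { unfold FF, UU. pose proof (Series_u_bounds q 0 hq0 hq1).
      pose proof (half_pos q (0+1) hq0 hq1). pose proof (fact_pos q (0+1) hq0 hq1).
      assert (0 < aa q 0).
      { unfold aa. apply Rmult_lt_0_compat. apply Rmult_lt_0_compat. apply pow_lt; lra.
        apply pow_lt; lra. apply br_pos; auto; lia. }
      apply Rdiv_lt_0_compat. apply Rmult_lt_0_compat. lra. apply pow_lt; lra. apply pow_lt; lra. }
    rewrite HF0 in H. unfold Rdiv in H. rewrite Rmult_0_l in H. lra. }
  assert (HU : UU q l = (1 + q) ^ 2 * (qfact q (l + 1)) ^ 2
       / (pi_q q * (qhalf q (l + 1)) ^ 2) * qpow q (9/4)).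
  { pose proof (FF_const q l hq0 hq1). rewrite HF0 in H. unfold FF in H.
    unfold pi_q, qpoch_inf. fold (Pp q). fold (Qp q).
    rewrite (lim_seq_eq _ _ HQ), (lim_seq_eq _ _ HP).
    assert (E : qpow q (9/4) = q ^ 2 * qpow q (1/4)).
    { unfold qpow. replace (9/4) with (INR 2 + 1/4) by (simpl; field).
      rewrite Rpower_plus, Rpower_pow by auto. reflexivity. }
    rewrite E.
    assert (0 < qpow q (1/4)) by (unfold qpow, Rpower; apply exp_pos).
    pose proof (half_pos q (l+1) hq0 hq1). pose proof (fact_pos q (l+1) hq0 hq1).
    assert (UU q l = q ^ 2 * (1 + q) ^ 2 / (1 - q ^ 2) * (Q / P * (Q / P)) * qfact q (l + 1) ^ 2 / qhalf q (l + 1) ^ 2).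
    { rewrite <- H. field. lra. }
    rewrite H3. field. repeat split; lra. }
  rewrite <- HU. apply is_lim_seq_Reals.
  pose proof (PS_lim q l hq0 hq1) as H0. apply is_lim_seq_incr_1 in H0.
  apply is_lim_seq_ext with (2 := H0). intro N.
  unfold PS, aa. rewrite decomp_sum by lia. simpl pred.
  rewrite u0 by auto. rewrite qbr_nat by auto. unfold u.
  rewrite scal_sum. rewrite Rmult_comm. ring_simplify.
  f_equal. apply sum_eq. intros. ring.
Qed.
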